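(* Let $(X,d)$ be a hemi-metric space and $(E,\delta)$ a metric space. Let $T=(T_{ab})_{(a,b)\in E\times E}$ and $T'=(T'_{ab})_{(a,b)\in E\times E}$ be two families of self-maps of $X$ that are nonexpansive with respect to $d$. Suppose there exist $\epsilon\ge 0$ and $L>0$ such that for all $(a,b),(a',b')\in E\times E$ and all $x\in X$, \[ d^{\circ}(T_{ab}(x),T'_{a'b'}(x))\le L(\delta(a,a')+\delta(b,b'))+\epsilon. \] Then for all nonempty compact subsets $\mathcal{A},\mathcal{A}',\mathcal{B},\mathcal{B}'\subset E$, \[ |\rho(T,\mathcal{A},\mathcal{B})-\rho(T',\mathcal{A}',\mathcal{B}')|\le L\big(\delta_H(\mathcal{A},\mathcal{A}')+\delta_H(\mathcal{B},\mathcal{B}')\big)+\epsilon. \]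
   Context: A hemi-metric on a set $X$ is a map $d:X\times X\to\mathbb{R}$ satisfying $d(x,z)\le d(x,y)+d(y,z)$ for all $x,y,z$, and $d(x,y)=d(y,x)=0$ iff $x=y$ (it may take negative values). Its symmetrization $d^{\circ}(x,y)=\max(d(x,y),d(y,x))$ is a metric, and $X$ carries the topology of $d^{\circ}$. A map $T:X\to X$ is nonexpansive if $d(T(x),T(y))\le d(x,y)$ for all $x,y$. $\delta_H$ denotes the Hausdorff distance between compact subsets of $E$ induced by $\delta$. Escape rate game and its value: given nonempty compact action sets $\mathcal{A},\mathcal{B}$, a family of nonexpansive self-maps $T_{ab}$ of $X$, $(a,b)\in\mathcal{A}\times\mathcal{B}$, and an initial state $x_0\in X$, two players play infinitely many turns with perfect information: at turn $k\ge1$, player Min chooses $a_k\in\mathcal{A}$, then, having observed $a_k$, player Max chooses $b_k\in\mathcal{B}$, and the state becomes $x_k=T_{a_kb_k}(x_{k-1})$. A strategy of a player is a map assigning an action to each finite history of states and actions. For strategies $\sigma$ of Min and $\tau$ of Max, the payoff is the escape rate $J(\sigma,\tau)=\limsup_{k\to\infty}\frac1k d(x_k,x_0)$ (independent of $x_0$), which Min minimizes and Max maximizes. The game has value $\lambda\in\mathbb{R}$ if for every $\epsilon'>0$ there are strategies $\sigma^*,\tau^*$ with $J(\sigma^*,\tau)\le\lambda+\epsilon'$ and $J(\sigma,\tau^* )\ge\lambda-\epsilon'$ for all strategies $\sigma,\tau$. The value (competitive spectral radius) is denoted $\rho(T,\mathcal{A},\mathcal{B})$. Standing assumption (under which the value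 exists): for every $x\in X$ the maps $a\mapsto T_{ab}(x)$ and $b\mapsto T_{ab}(x)$ are continuous, and for every compact $K\subset X$ the set $\{T_{ab}(x):(a,b,x)\in\mathcal{A}\times\mathcal{B}\times K\}$ is compact; this is assumed for both families $T,T'$ and all the action sets considered. *)

(* Defs.v *)
From Stdlib Require List.
From HB Require Import structures.
From mathcomp Require Import all_boot all_order all_algebra.
From mathcomp Require Import all_classical all_reals all_analysis.
Set Implicit Arguments. Unset Strict Implicit. Unset Printing Implicit Defensive.
Import Order.TTheory GRing.Theory Num.Theory.
Local Open Scope classical_set_scope.
Local Open Scope ring_scope.

Section Defs.
Variable R : realType.

Definition hemi_metric (X : Type) (d : X -> X -> R) : Prop :=
  (forall x y z, d x z <= d x y + d y z) /\
  (forall x y, (d x y = 0 /\ d y x = 0) <-> x = y).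

Definition metric (E : Type) (dl : E -> E -> R) : Prop :=
  (forall a b, dl a b = 0 <-> a = b) /\
  (forall a b, dl a b = dl b a) /\
  (forall a b c, dl a c <= dl a b + dl b c).

Definition dsym (X : Type) (d : X -> X -> R) (x y : X) : R := Num.max (d x y) (d y x).

Definition mopen (X : Type) (m : X -> X -> R) (U : set X) : Prop :=
  forall x, U x -> exists2 r : R, 0 < r & forall y, m x y < r -> U y.

Definition mcompact (X : Type) (m : X -> X -> R) (K : set X) : Prop :=
  forall (I : Type) (U : I -> set X),
    (forall i, mopen m (U i)) -> K `<=` \bigcup_i U i ->
    exists s : seq I, K `<=` \bigcup_(i in [set i | List.In i s]) U i.

Definition nonexpansive (X : Type) (d : X -> X -> R) (f : X -> X) : Prop :=
  forall x y, d (f x) (f y) <= d x y.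

Definition hausdorff (E : Type) (dl : E -> E -> R) (A B : set E) : R :=
  Num.max (sup [set inf [set dl a b | b in B] | a in A])
          (sup [set inf [set dl a b | a in A] | b in B]).

Definition standing (X E : Type) (d : X -> X -> R) (dl : E -> E -> R)
  (T : E -> E -> X -> X) (A B : set E) : Prop :=
  (forall b x, B b -> forall a, A a -> forall e : R, 0 < e ->
     exists2 eta : R, 0 < eta & forall a', A a' -> dl a a' < eta ->
       dsym d (T a b x) (T a' b x) < e) /\
  (forall a x, A a -> forall b, B b -> forall e : R, 0 < e ->
     exists2 eta : R, 0 < eta & forall b', B b' -> dl b b' < eta ->
       dsym d (T a b x) (T a b' x) < e) /\
  (forall K : set X, mcompact (dsym d) K ->
     mcompact (dsym d) [set y | exists a b x, [/\ A a, B b, K x & y = T a b x]] ).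

(* Histories: initial state x0 together with the list of past turns
   (a_i, b_i, x_i).  Min strategy: history -> action;
   Max strategy: history -> Min's current action -> action. *)
Definition history (X E : Type) := seq (E * E * X)%type.

Definition min_strategy (X E : Type) (A : set E)
  (sigma : X -> history X E -> E) : Prop := forall x0 h, A (sigma x0 h).

Definition max_strategy (X E : Type) (B : set E)
  (tau : X -> history X E -> E -> E) : Prop := forall x0 h a, B (tau x0 h a).

Fixpoint play (X E : Type) (T : E -> E -> X -> X) (x0 : X)
  (sigma : X -> history X E -> E) (tau : X -> history X E -> E -> E) (k : nat)
  : history X E * X :=
  match k with
  | O => ([::], x0)
  | S k' => let: (h, x) := play T x0 sigma tau k' in
            let a := sigma x0 h in
            let b := tau x0 h a in
            let x' := T a b x in
            (rcons h (a, b, x'), x')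
  end.

Definition payoff (X E : Type) (d : X -> X -> R) (T : E -> E -> X -> X) (x0 : X)
  sigma tau : \bar R :=
  limn_esup (fun k : nat => ((d (play T x0 sigma tau k).2 x0) / k%:R)%:E).

Definition game_value (X E : Type) (d : X -> X -> R) (T : E -> E -> X -> X)
  (A B : set E) (x0 : X) (lam : R) : Prop :=
  forall e : R, 0 < e ->
    exists sigma, exists tau,
      min_strategy A sigma /\ max_strategy B tau /\
      (forall tau', max_strategy B tau' ->
         (payoff d T x0 sigma tau' <= (lam + e)%:E)%E) /\
      (forall sigma', min_strategy A sigma' ->
         ((lam - e)%:E <= payoff d T x0 sigma' tau)%E).

End Defs.

(* Main.v *)
Require Import Defs.
From HB Require Import structures.
From mathcomp Require Import all_boot all_order all_algebra.
From mathcomp Require Import all_classical all_reals all_analysis.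
From mathcomp Require Import ring lra.
Import Order.TTheory GRing.Theory Num.Theory.
Local Open Scope classical_set_scope.
Local Open Scope ring_scope.


Section Helpers.
Variables (R : realType) (E : Type).

Lemma metric_ge0 (dl : E -> E -> R) : metric dl -> forall a b, 0 <= dl a b.
Proof.
move=> [d0 [ds dt]] a b; have := dt a b a.
have -> : dl a a = 0 by apply/d0.
by rewrite (ds b a); lra.
Qed.

Lemma in_le_fold {s : seq R} {r} : List.In r s -> r <= foldr Num.max 0 s.
Proof.
elim: s => //= j s IH [->|/IH h]; rewrite le_max ?lexx //.
by rewrite h orbT.
Qed.

Lemma cpt_bound (dl : E -> E -> R) K : metric dl -> mcompact dl K ->
  forall z, exists M, forall y, K y -> dl z y <= M /\ dl y z <= M.
Proof.
move=> [d0 [ds dt]] cK z.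
have [||s hs] := cK R (fun r => [set y | dl z y < r]).
- move=> r x /= hx; exists (r - dl z x); first by rewrite subr_gt0.
  move=> y hy /=; have := dt z x y; lra.
- move=> y Ky; exists (dl z y + 1) => //=; lra.
exists (foldr Num.max 0 s) => y Ky.
case: (hs y Ky) => r /= Hr Hy.
have := in_le_fold Hr; rewrite (ds y z); lra.
Qed.

Lemma hd_approx (P S : set E) (f : E -> E -> R) b0 M :
  S b0 -> (forall a, P a -> f a b0 <= M) -> (forall a b, 0 <= f a b) ->
  forall a, P a -> forall eta, 0 < eta ->
  exists2 b, S b & f a b <= sup [set inf [set f a b | b in S] | a in P] + eta.
Proof.
move=> Sb0 HM f0 a Pa eta eta0.
have hlb : forall a, has_lbound [set f a b | b in S].
  by move=> a'; exists 0 => _ [b _ <-]; exact: f0.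
have hinf : has_inf [set f a b | b in S].
  by split; [exists (f a b0), b0|exact: hlb].
have [e [b Sb <-] He] := inf_adherent eta0 hinf.
exists b => //.
have ub : has_ubound [set inf [set f a b | b in S] | a in P].
  exists M => _ [a' Pa' <-].
  apply: le_trans (HM a' Pa'); apply: (ge_inf (hlb a')); by exists b0.
have : inf [set f a b | b in S] <= sup [set inf [set f a b | b in S] | a in P].
  by apply: (ub_le_sup ub); exists a.
lra.
Qed.

Lemma esup_le (u v : nat -> R) (C m e : R) : 0 < e ->
  (forall n, u n <= C + v n) ->
  (limn_esup (fun n => (v n)%:E) <= m%:E)%E ->
  (limn_esup (fun n => (u n)%:E) <= (C + m + e)%:E)%E.
Proof.
move=> e0 huv hv.
have : (limn_esup (fun n => (v n)%:E) < (m + e)%:E)%E.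
  by apply: le_lt_trans hv _; rewrite lte_fin; lra.
rewrite /limn_esup limf_esupE => /ereal_inf_lt [_ [V HV <-] HVlt].
rewrite limf_esupE; apply: le_trans (ereal_inf_lbound _) _.
  by exists V.
apply: ge_ereal_sup => _ [n Vn <-].
have : ((v n)%:E <= ereal_sup [set (v n)%:E | n in V])%E.
  by apply: ereal_sup_ubound; exists n.
move=> /le_lt_trans /(_ HVlt); rewrite lte_fin lee_fin => hvn.
have := huv n; lra.
Qed.

End Helpers.

Section Game.
Variables (R : realType) (X E : Type).

Definition lastx (y0 : X) (h : history X E) : X := last y0 [seq p.2 | p <- h].

Lemma lastx_rcons y0 h p : lastx y0 (rcons h p) = p.2.
Proof. by rewrite /lastx map_rcons last_rcons. Qed.

Lemma playS (T : E -> E -> X -> X) x0 s t k :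
  play T x0 s t k.+1 =
  (rcons (play T x0 s t k).1
     (s x0 (play T x0 s t k).1, t x0 (play T x0 s t k).1 (s x0 (play T x0 s t k).1),
      T (s x0 (play T x0 s t k).1) (t x0 (play T x0 s t k).1 (s x0 (play T x0 s t k).1))
        (play T x0 s t k).2),
   T (s x0 (play T x0 s t k).1) (t x0 (play T x0 s t k).1 (s x0 (play T x0 s t k).1))
        (play T x0 s t k).2).
Proof. by rewrite /=; case: (play T x0 s t k). Qed.

Lemma play_last (T : E -> E -> X -> X) x0 s t k :
  (play T x0 s t k).2 = lastx x0 (play T x0 s t k).1.
Proof. by case: k => [//|k]; rewrite playS /= lastx_rcons. Qed.

Lemma dsym_tri (d : X -> X -> R) : hemi_metric d ->
  forall x y z, dsym d x z <= dsym d x y + dsym d y z.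
Proof.
move=> [tri _] x y z; rewrite /dsym ge_max; apply/andP; split.
- apply: le_trans (tri x y z) _; apply: lerD; rewrite le_max lexx ?orbT //.
- apply: le_trans (tri z y x) _; rewrite addrC; apply: lerD; rewrite le_max lexx ?orbT //.
Qed.

Lemma dsym_ne (d : X -> X -> R) f : nonexpansive d f ->
  forall x y, dsym d (f x) (f y) <= dsym d x y.
Proof.
move=> ne x y; rewrite /dsym ge_max; apply/andP; split.
- by apply: le_trans (ne x y) _; rewrite le_max lexx.
- by apply: le_trans (ne y x) _; rewrite le_max lexx orbT.
Qed.

Lemma dsymC (d : X -> X -> R) x y : dsym d x y = dsym d y x.
Proof. by rewrite /dsym maxC. Qed.

Lemma one_side (d : X -> X -> R) (T T' : E -> E -> X -> X) (A B A' B' : set E)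
  (pA pB : E -> E) (C : R) x0 rho rho' :
  hemi_metric d -> (forall a b, nonexpansive d (T a b)) -> 0 <= C ->
  (forall a', A' a' -> A (pA a')) -> (forall b, B b -> B' (pB b)) ->
  (forall a' b x, A' a' -> B b -> dsym d (T (pA a') b x) (T' a' (pB b) x) <= C) ->
  game_value d T A B x0 rho -> game_value d T' A' B' x0 rho' -> rho - rho' <= C.
Proof.
move=> hd ne C0 HpA HpB HC gv gv'.
apply/ler_addgt0Pr => e e0.
have e30 : 0 < e / 3 by rewrite divr_gt0.
have [_ [tau [_ [tauB [_ Htau]]]]] := gv _ e30.
have [sig' [_ [sig'A [_ [Hsig' _]]]]] := gv' _ e30.
pose stepS (y0 : X) (h' : history X E) (p : E * E * X) : history X E :=
  rcons h' (sig' y0 h', pB p.1.2,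
            T' (sig' y0 h') (pB p.1.2) (lastx y0 h')).
pose sim y0 h := foldl (stepS y0) [::] h.
pose stepT (y0 : X) (h : history X E) (p : E * E * X) : history X E :=
  rcons h (pA p.1.1, tau y0 h (pA p.1.1),
           T (pA p.1.1) (tau y0 h (pA p.1.1)) (lastx y0 h)).
pose simT y0 h' := foldl (stepT y0) [::] h'.
pose sig y0 h := pA (sig' y0 (sim y0 h)).
pose tau' y0 h' a' := pB (tau y0 (simT y0 h') (pA a')).
have sigA : min_strategy A sig by move=> y0 h; apply/HpA/sig'A.
have tau'B : max_strategy B' tau' by move=> y0 h a; apply/HpB/tauB.
have simS : forall y0 h p, sim y0 (rcons h p) = stepS y0 (sim y0 h) p.
  by move=> y0 h p; rewrite /sim foldl_rcons.
have simTS : forall y0 h p, simT y0 (rcons h p) = stepT y0 (simT y0 h) p.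
  by move=> y0 h p; rewrite /simT foldl_rcons.
have sigE : forall y0 h, sig y0 h = pA (sig' y0 (sim y0 h)) by [].
have tau'E : forall y0 h a, tau' y0 h a = pB (tau y0 (simT y0 h) (pA a)) by [].
have sim0 : forall y0, sim y0 [::] = [::] by [].
have simT0 : forall y0, simT y0 [::] = [::] by [].
clearbody sig tau' sim simT.
have inv : forall k,
  [/\ sim x0 (play T x0 sig tau k).1 = (play T' x0 sig' tau' k).1,
      simT x0 (play T' x0 sig' tau' k).1 = (play T x0 sig tau k).1 &
      dsym d (play T x0 sig tau k).2 (play T' x0 sig' tau' k).2 <= k%:R * C].
  elim=> [|k [IH1 IH2 IH3]].
    by split => //=; rewrite mul0r /dsym; case: hd => _ /(_ x0 x0) [_ /(_ erefl) [-> _]]; rewrite maxxx.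
  rewrite !playS /= ![(play _ _ _ _ k).2]play_last.
  move: IH1 IH2 IH3; rewrite ![(play _ _ _ _ k).2]play_last.
  move: (play T x0 sig tau k).1 (play T' x0 sig' tau' k).1 => H H' IH1 IH2 IH3.
  split.
  - by rewrite simS IH1 /stepS /= tau'E sigE IH1 IH2.
  - by rewrite simTS IH2 /stepT /= sigE IH1.
  - set x := lastx x0 H; set x' := lastx x0 H'.
    have -> : sig x0 H = pA (sig' x0 H') by rewrite sigE IH1.
    have -> : tau' x0 H' (sig' x0 H') = pB (tau x0 H (pA (sig' x0 H'))).
      by rewrite tau'E IH2.
    set a' := sig' x0 H'; set b := tau x0 H (pA a').
    apply: le_trans (@dsym_tri d hd _ (T (pA a') b x') _) _.
    have := @dsym_ne d _ (ne (pA a') b) x x'.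
    have := HC a' b x' (sig'A _ _) (tauB _ _ _).
    rewrite -natr1 mulrDl mul1r; lra.
have := Htau sig sigA; have := Hsig' tau' tau'B.
rewrite /payoff => h' h.
have huv : forall k, d (play T x0 sig tau k).2 x0 / k%:R <=
    C + d (play T' x0 sig' tau' k).2 x0 / k%:R.
  move=> k; have [I1 I2 I3] := inv k.
  case: k I3 {I1 I2} => [|k] I3.
    by rewrite invr0 !mulr0 addr0.
  have k0 : 0 < k.+1%:R :> R by rewrite ltr0n.
  rewrite -[C](mulfK (lt0r_neq0 k0)) -mulrDl ler_pM2r ?invr_gt0 //.
  have [tri _] := hd.
  apply: le_trans (tri _ (play T' x0 sig' tau' k.+1).2 _) _.
  rewrite mulrC; apply: lerD => //.
  apply: le_trans I3; rewrite /dsym le_max lexx //.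
have := @esup_le R (fun k => d (play T x0 sig tau k).2 x0 / k%:R)
  (fun k => d (play T' x0 sig' tau' k).2 x0 / k%:R) C (rho' + e / 3) (e / 3) e30 huv h'.
move=> h2; have := le_trans h h2; rewrite lee_fin; lra.
Qed.

End Game.

Theorem theorem3 (R : realType) (X E : Type) (d : X -> X -> R) (dl : E -> E -> R)
  (T T' : E -> E -> X -> X) (eps L : R) :
  hemi_metric d -> metric dl ->
  (forall a b, nonexpansive d (T a b)) ->
  (forall a b, nonexpansive d (T' a b)) ->
  0 <= eps -> 0 < L ->
  (forall a b a' b' x,
     dsym d (T a b x) (T' a' b' x) <= L * (dl a a' + dl b b') + eps) ->
  forall (A A' B B' : set E),
    A !=set0 -> A' !=set0 -> B !=set0 -> B' !=set0 ->
    mcompact dl A -> mcompact dl A' -> mcompact dl B -> mcompact dl B' ->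
    standing d dl T A B -> standing d dl T' A' B' ->
  forall (x0 : X) (rho rho' : R),
    game_value d T A B x0 rho -> game_value d T' A' B' x0 rho' ->
    `|rho - rho'| <= L * (hausdorff dl A A' + hausdorff dl B B') + eps.
Proof.
move=> hd hdl neT neT' eps0 L0 HT A A' B B' [a0 Aa0] [a0' A'a0'] [b0 Bb0] [b0' B'b0']
  cA cA' cB cB' _ _ x0 rho rho' gv gv'.
have dl0 := @metric_ge0 R E dl hdl.
have [_ [dls _]] := hdl.
set hA := hausdorff dl A A'; set hB := hausdorff dl B B'.
have apA : forall a', A' a' -> forall eta, 0 < eta -> exists2 a, A a & dl a a' <= hA + eta.
  move=> a' A'a' eta eta0.
  have [M HM] := @cpt_bound R E dl _ hdl cA' a0.
  have [a Aa Ha] := @hd_approx R E A' A (fun b a => dl a b) a0 M Aa0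
    (fun b Hb => (HM b Hb).1) (fun _ _ => dl0 _ _) a' A'a' eta eta0.
  exists a => //; apply: le_trans Ha _; rewrite lerD2r /hA /hausdorff le_max lexx orbT //.
have apB : forall b, B b -> forall eta, 0 < eta -> exists2 b', B' b' & dl b b' <= hB + eta.
  move=> b Bb eta eta0.
  have [M HM] := @cpt_bound R E dl _ hdl cB b0'.
  have [b' B'b' Hb] := @hd_approx R E B B' dl b0' M B'b0'
    (fun a Ha => (HM a Ha).2) dl0 b Bb eta eta0.
  exists b' => //; apply: le_trans Hb _; rewrite lerD2r /hB /hausdorff le_max lexx //.
have apA2 : forall a, A a -> forall eta, 0 < eta -> exists2 a', A' a' & dl a a' <= hA + eta.
  move=> a Aa eta eta0.
  have [M HM] := @cpt_bound R E dl _ hdl cA a0'.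
  have [b' B'b' Hb] := @hd_approx R E A A' dl a0' M A'a0'
    (fun a Ha => (HM a Ha).2) dl0 a Aa eta eta0.
  exists b' => //; apply: le_trans Hb _; rewrite lerD2r /hA /hausdorff le_max lexx //.
have apB2 : forall b', B' b' -> forall eta, 0 < eta -> exists2 b, B b & dl b b' <= hB + eta.
  move=> b' B'b' eta eta0.
  have [M HM] := @cpt_bound R E dl _ hdl cB' b0.
  have [a Aa Ha] := @hd_approx R E B' B (fun b a => dl a b) b0 M Bb0
    (fun b Hb => (HM b Hb).1) (fun _ _ => dl0 _ _) b' B'b' eta eta0.
  exists a => //; apply: le_trans Ha _; rewrite lerD2r /hB /hausdorff le_max lexx orbT //.
have key : forall eta, 0 < eta ->
    rho - rho' <= L * (hA + hB + 2 * eta) + eps /\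
    rho' - rho <= L * (hA + hB + 2 * eta) + eps.
  move=> eta eta0.
  have C0 : 0 <= L * (hA + hB + 2 * eta) + eps.
    have hA0 : 0 <= hA + eta.
      have [a Aa Ha] := apA a0' A'a0' eta eta0; apply: le_trans Ha; exact: dl0.
    have hB0 : 0 <= hB + eta.
      have [b Bb Hb] := apB b0 Bb0 eta eta0; apply: le_trans Hb; exact: dl0.
    apply: addr_ge0 => //; apply: mulr_ge0; [exact: ltW|lra].
  split.
  - have : forall a', exists a, A' a' -> A a /\ dl a a' <= hA + eta.
      move=> a'; case: (pselect (A' a')) => h.
        by have [a Aa Ha] := apA a' h eta eta0; exists a.
      by exists a0.
    move=> /choice [pA HpA].
    have : forall b, exists b', B b -> B' b' /\ dl b b' <= hB + eta.
      move=> b; case: (pselect (B b)) => h.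
        by have [b' Bb Hb] := apB b h eta eta0; exists b'.
      by exists b0'.
    move=> /choice [pB HpB].
    apply: (@one_side R X E d T T' A B A' B' pA pB _ x0 rho rho' hd neT C0 _ _ _ gv gv').
    + by move=> a' /HpA [].
    + by move=> b /HpB [].
    + move=> a' b x Ha Hb; apply: le_trans (HT _ _ _ _ x) _; rewrite lerD2r.
      apply: ler_wpM2l; first exact: ltW.
      have := (HpA a' Ha).2; have := (HpB b Hb).2; lra.
  - have : forall a, exists a', A a -> A' a' /\ dl a a' <= hA + eta.
      move=> a; case: (pselect (A a)) => h.
        by have [a' Aa Ha] := apA2 a h eta eta0; exists a'.
      by exists a0'.
    move=> /choice [pA HpA].
    have : forall b', exists b, B' b' -> B b /\ dl b b' <= hB + eta.
      move=> b'; case: (pselect (B' b')) => h.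
        by have [b Bb Hb] := apB2 b' h eta eta0; exists b.
      by exists b0.
    move=> /choice [pB HpB].
    apply: (@one_side R X E d T' T A' B' A B pA pB _ x0 rho' rho hd neT' C0 _ _ _ gv' gv).
    + by move=> a /HpA [].
    + by move=> b /HpB [].
    + move=> a b' x Ha Hb; rewrite dsymC.
      apply: le_trans (HT _ _ _ _ x) _; rewrite lerD2r.
      apply: ler_wpM2l; first exact: ltW.
      have := (HpA a Ha).2; have := (HpB b' Hb).2; lra.
rewrite ler_norml; apply/andP; split; last first.
  apply/ler_addgt0Pr => e e0.
  have eta0 : 0 < e / (2 * L) by rewrite divr_gt0 // mulr_gt0.
  have [k1 _] := key _ eta0.
  have Le : L * (hA + hB + 2 * (e / (2 * L))) + eps = L * (hA + hB) + eps + e.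
    by field; rewrite lt0r_neq0.
  lra.
rewrite lerNl opprB.
apply/ler_addgt0Pr => e e0.
have eta0 : 0 < e / (2 * L) by rewrite divr_gt0 // mulr_gt0.
have [_ k2] := key _ eta0.
have Le : L * (hA + hB + 2 * (e / (2 * L))) + eps = L * (hA + hB) + eps + e.
  by field; rewrite lt0r_neq0.
lra.
Qed.
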